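(* On the noncommutative space $\mathbb{R}^4_\theta$ described in the context, the pair $(\nabla,\sigma)$, where $\nabla:\Omega^1_A\to\Omega^1_A\otimes_A\Omega^1_A$ is given by $\nabla(\sum_ia_i\,\mathrm{d}z^i)=\sum_i\mathrm{d}a_i\otimes_A\mathrm{d}z^i$ (i.e. $\nabla(\mathrm{d}z^i)=0$ plus the left Leibniz rule) and $\sigma:\Omega^1_A\otimes_A\Omega^1_A\to\Omega^1_A\otimes_A\Omega^1_A$ is the left $A$-linear map with $\sigma(\mathrm{d}z^i\otimes_A\mathrm{d}z^j)=R^{ji}\,\mathrm{d}z^j\otimes_A\mathrm{d}z^i$, is a bimodule connection on $\Omega^1_A$.
   Context: Let $\theta\in\mathbb{R}$ and $R=(R^{ab})$ the $4\times4$ matrix (row $a$, column $b$) with rows $(1,e^{-i\theta},1,e^{i\theta})$, $(e^{i\theta},1,e^{-i\theta},1)$, $(1,e^{i\theta},1,e^{-i\theta})$, $(e^{-i\theta},1,e^{i\theta},1)$. Let $A=\mathbb{C}\langle z^1,\dots,z^4\rangle/(z^iz^j-R^{ji}z^jz^i)$, $\Omega^1_A=\bigoplus_{i=1}^4A\,\mathrm{d}z^i$ the free left $A$-module with right action determined by $\mathrm{d}z^i\,z^j=R^{ji}z^j\,\mathrm{d}z^i$, and $\mathrm{d}:A\to\Omega^1_A$ with $z^i\mapsto\mathrm{d}z^i$ extended by the Leibniz rule. A bimodule connection on an $A$-bimodule $V$ is a pair $(\nabla,\sigma)$ of a linear map $\nabla:V\to\Omega^1_A\otimes_AV$ and an $A$-bimodule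 isomorphism $\sigma:V\otimes_A\Omega^1_A\to\Omega^1_A\otimes_AV$ with $\nabla(av)=a\nabla(v)+\mathrm{d}a\otimes_Av$ and $\nabla(va)=\nabla(v)a+\sigma(v\otimes_A\mathrm{d}a)$ for all $a\in A$, $v\in V$. *)

(* Defs.v *)
From HB Require Import structures.
From mathcomp Require Import all_boot all_order all_algebra.
From mathcomp Require Import complex Rstruct mpoly.
From Stdlib Require Rtrigo_def.

Set Implicit Arguments.
Unset Strict Implicit.
Unset Printing Implicit Defensive.

Import GRing.Theory Num.Theory.
Local Open Scope ring_scope.

Definition Cx := complex Rdefinitions.R.

Definition expi (t : Rdefinitions.R) : Cx :=
  (Rtrigo_def.cos t +i* Rtrigo_def.sin t)%C.

(* Indices: z^1,...,z^4 are indexed by the ordinals 0,1,2,3 of 'I_4. *)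

(* The matrix R = (R^{ab}) (row a, column b) of the paper:
   rows (1,e^{-it},1,e^{it}), (e^{it},1,e^{-it},1),
        (1,e^{it},1,e^{-it}), (e^{-it},1,e^{it},1). *)
Definition Rnat (theta : Rdefinitions.R) (a b : nat) : Cx :=
  match a, b with
  | 0, 1 => expi (- theta)%R | 0, 3 => expi theta
  | 1, 0 => expi theta       | 1, 2 => expi (- theta)%R
  | 2, 1 => expi theta       | 2, 3 => expi (- theta)%R
  | 3, 0 => expi (- theta)%R | 3, 2 => expi theta
  | _, _ => 1
  end.

Definition Rmx (theta : Rdefinitions.R) : 'M[Cx]_4 :=
  \matrix_(a < 4, b < 4) Rnat theta a b.

Section Rtheta.
Variable theta : Rdefinitions.R.
Local Notation R := (Rmx theta).

(* The algebra A = C<z^1,..,z^4>/(z^i z^j - R^{ji} z^j z^i),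
   realised on its PBW basis of ordered monomials
   z^m = (z^1)^{m_1}(z^2)^{m_2}(z^3)^{m_3}(z^4)^{m_4}.
   The underlying C-vector space is that of {mpoly Cx[4]} (finitely
   supported coefficient functions on monomials); the product is the
   twisted product  z^m z^n = tw m n z^{m+n},  where
   tw m n = prod_{j<i} (R^{ji})^{m_i n_j}  (obtained by moving every z^j of
   z^n to the left past every z^i of z^m with i > j, using
   z^i z^j = R^{ji} z^j z^i). *)
Definition A := {mpoly Cx[4]}.

Definition tw (m n : 'X_{1..4}) : Cx :=
  \prod_(i < 4) \prod_(j < 4 | (j < i)%N) R j i ^+ (m i * n j).

Definition mulA (a b : A) : A :=
  \sum_(m <- msupp a) \sum_(n <- msupp b)
     (a@_m * b@_n * tw m n) *: 'X_[(m + n)%MM].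

Definition zA (i : 'I_4) : A := 'X_i.

(* Omega^1_A = (+)_i A dz^i, the free left A-module; an element
   sum_i a_i dz^i is represented by its coefficient function i |-> a_i. *)
Definition Omega1 := {ffun 'I_4 -> A}.

Definition dz (i : 'I_4) : Omega1 := [ffun j => if j == i then 1 else 0].

Definition lact1 (a : A) (w : Omega1) : Omega1 := [ffun i => mulA a (w i)].

(* The right action determined by dz^i z^j = R^{ji} z^j dz^i is
   dz^i a = phi_i(a) dz^i, where phi_i is the algebra automorphism with
   phi_i(z^j) = R^{ji} z^j, i.e. phi_i(z^m) = prod_j (R^{ji})^{m_j} z^m. *)
Definition phi (i : 'I_4) (a : A) : A :=
  \sum_(m <- msupp a) (a@_m * \prod_(j < 4) R j i ^+ m j) *: 'X_[m].

Definition ract1 (w : Omega1) (a : A) : Omega1 :=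
  [ffun i => mulA (w i) (phi i a)].

(* Since Omega^1_A is free as a left module on
   the dz^i and dz^i a = phi_i(a) dz^i with phi_i invertible, the balanced
   tensor product is the free left A-module on the dz^i (x) dz^j; an
   element sum_{ij} a_{ij} dz^i (x) dz^j is represented by (i,j) |-> a_{ij}. *)
Definition Omega2 := {ffun 'I_4 * 'I_4 -> A}.

(* (sum_i w_i dz^i) (x)_A (sum_j v_j dz^j) = sum_{ij} w_i phi_i(v_j) dz^i (x) dz^j *)
Definition tens (w v : Omega1) : Omega2 :=
  [ffun ij => mulA (w ij.1) (phi ij.1 (v ij.2))].

(* bimodule structure on Omega^1 (x)_A Omega^1:
   a (w (x) v) = (a w) (x) v  and  (w (x) v) a = w (x) (v a) *)
Definition lact2 (a : A) (x : Omega2) : Omega2 := [ffun ij => mulA a (x ij)].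
Definition ract2 (x : Omega2) (a : A) : Omega2 :=
  [ffun ij => mulA (x ij) (phi ij.1 (phi ij.2 a))].

Definition is_dA (d : A -> Omega1) : Prop :=
  [/\ forall a b, d (a + b) = d a + d b,
      forall (c : Cx) a, d (c *: a) = c *: d a,
      forall i, d (zA i) = dz i &
      forall a b, d (mulA a b) = ract1 (d a) b + lact1 a (d b)].

Definition nablaO (d : A -> Omega1) (w : Omega1) : Omega2 :=
  \sum_(i < 4) tens (d (w i)) (dz i).

Definition sigmaO (x : Omega2) : Omega2 :=
  \sum_(i < 4) \sum_(j < 4) lact2 (x (i, j)) (R j i *: tens (dz j) (dz i)).

(* Bimodule connection on the A-bimodule V = Omega^1_A (so that
   V (x)_A Omega^1 and Omega^1 (x)_A V are both Omega2 above). *)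
Definition bimodule_connection (d : A -> Omega1)
    (nabla : Omega1 -> Omega2) (sigma : Omega2 -> Omega2) : Prop :=
  [/\
      (forall v w, nabla (v + w) = nabla v + nabla w) /\
      (forall (c : Cx) v, nabla (c *: v) = c *: nabla v),
      [/\ forall x y, sigma (x + y) = sigma x + sigma y,
          forall a x, sigma (lact2 a x) = lact2 a (sigma x),
          forall x a, sigma (ract2 x a) = ract2 (sigma x) a &
          bijective sigma],
      forall a v, nabla (lact1 a v) = lact2 a (nabla v) + tens (d a) v &
      forall v a, nabla (ract1 v a) = ract2 (nabla v) a + sigma (tens v (d a))].

End Rtheta.

(* Main.v *)
Require Import Defs.
From HB Require Import structures.
From mathcomp Require Import all_boot all_order all_algebra.
From mathcomp Require Import complex Rstruct mpoly.
From Stdlib Require Import Reals.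
From mathcomp Require Import ssrcomplements.
Set Implicit Arguments.
Unset Strict Implicit.
Unset Printing Implicit Defensive.
Import GRing.Theory Num.Theory.
Local Open Scope ring_scope.

Lemma expiN (t : Rdefinitions.R) : expi t * expi (- t)%R = 1.
Proof.
rewrite /expi Rtrigo1.cos_neg Rtrigo1.sin_neg.
apply/eqP; rewrite eq_complex /=; apply/andP; split; apply/eqP.
  have h := sin2_cos2 t; rewrite /Rsqr in h.
  rewrite !RoppE mulrN opprK addrC; exact: h.
by rewrite !RoppE mulrN (mulrC (sin t)) addNr.
Qed.

Section S.
Variable theta : Rdefinitions.R.
Local Notation R := (Rmx theta).

Lemma RR (k l : 'I_4) : R k l * R l k = 1.
Proof.
rewrite !mxE.
case: k => [[|[|[|[|k]]]] Hk] //; case: l => [[|[|[|[|l]]]] Hl] //=;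
  rewrite ?mulr1 ?expiN // mulrC expiN //.
Qed.

Lemma R_neq0 (k l : 'I_4) : R k l != 0.
Proof. by apply/eqP => h; have := RR k l; rewrite h mul0r => /eqP; rewrite eq_sym oner_eq0. Qed.

Lemma sum_msupp_w (V : nmodType) (G : 'X_{1..4} -> Cx -> V) (p : A) (k : nat) :
  (forall m, G m 0 = 0) -> leq (msize p) k ->
  \sum_(m <- msupp p) G m p@_m = \sum_(m : 'X_{1..4 < k}) G m p@_m.
Proof.
move=> G0 lt_pk; pose I : subFinType _ := 'X_{1..4 < k}.
rewrite (big_mksub I) //=; first last.
- by move=> x /msize_mdeg_lt /leq_trans; apply.
- by rewrite msupp_uniq.
by rewrite big_rmcond //= => i /memN_msupp_eq0 ->; rewrite G0.
Qed.

Lemma mulA_w (k : nat) (a b : A) : leq (msize a) k -> leq (msize b) k ->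
  Defs.mulA theta a b = \sum_(m : 'X_{1..4 < k}) \sum_(n : 'X_{1..4 < k})
     (a@_m * b@_n * tw theta m n) *: 'X_[(m + n)%MM].
Proof.
move=> ha hb; rewrite /Defs.mulA; apply: etrans.
  apply: (@sum_msupp_w _ (fun m c => \sum_(n <- msupp b) (c * b@_n * tw theta m n) *: 'X_[(m + n)%MM]) a k _ ha).
  by move=> m; apply: big1 => n _; rewrite !mul0r scale0r.
apply: eq_bigr => m _ /=; apply: etrans.
  apply: (@sum_msupp_w _ (fun n c => (a@_m * c * tw theta m n) *: 'X_[(m + n)%MM]) b k _ hb).
  by move=> n; rewrite mulr0 mul0r scale0r.
by [].
Qed.

Lemma mulADl a a' b : Defs.mulA theta (a + a') b = Defs.mulA theta a b + Defs.mulA theta a' b.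
Proof.
set k := maxn (msize a) (maxn (msize a') (msize b)).
have h1 : leq (msize a) k by rewrite leq_max leqnn.
have h2 : leq (msize a') k by rewrite /k !leq_max leqnn orbT.
have h3 : leq (msize b) k by rewrite /k !leq_max leqnn !orbT.
have h4 : leq (msize (a + a')) k.
  by apply: leq_trans (msizeD_le _ _) _; rewrite geq_max h1 h2.
rewrite !(@mulA_w k) // -big_split; apply: eq_bigr => m _.
rewrite -big_split; apply: eq_bigr => n _.
by rewrite mcoeffD !mulrDl scalerDl.
Qed.

Lemma mulADr a b b' : Defs.mulA theta a (b + b') = Defs.mulA theta a b + Defs.mulA theta a b'.
Proof.
set k := maxn (msize b) (maxn (msize b') (msize a)).
have h1 : leq (msize b) k by rewrite leq_max leqnn.
have h2 : leq (msize b') k by rewrite /k !leq_max leqnn orbT.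
have h3 : leq (msize a) k by rewrite /k !leq_max leqnn !orbT.
have h4 : leq (msize (b + b')) k.
  by apply: leq_trans (msizeD_le _ _) _; rewrite geq_max h1 h2.
rewrite !(@mulA_w k) // -big_split; apply: eq_bigr => m _.
rewrite -big_split; apply: eq_bigr => n _.
by rewrite mcoeffD mulrDr !mulrDl scalerDl.
Qed.

Lemma mulAZl c a b : Defs.mulA theta (c *: a) b = c *: Defs.mulA theta a b.
Proof.
set k := maxn (msize a) (msize b).
have h1 : leq (msize a) k by rewrite leq_max leqnn.
have h3 : leq (msize b) k by rewrite /k !leq_max leqnn !orbT.
have h4 : leq (msize (c *: a)) k by apply: leq_trans (msizeZ_le _ _) _.
rewrite !(@mulA_w k) // scaler_sumr; apply: eq_bigr => m _.
rewrite scaler_sumr; apply: eq_bigr => n _.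
by rewrite mcoeffZ scalerA !mulrA.
Qed.

Lemma mulAZr c a b : Defs.mulA theta a (c *: b) = c *: Defs.mulA theta a b.
Proof.
set k := maxn (msize a) (msize b).
have h1 : leq (msize a) k by rewrite leq_max leqnn.
have h3 : leq (msize b) k by rewrite /k !leq_max leqnn !orbT.
have h4 : leq (msize (c *: b)) k by apply: leq_trans (msizeZ_le _ _) _.
rewrite !(@mulA_w k) // scaler_sumr; apply: eq_bigr => m _.
rewrite scaler_sumr; apply: eq_bigr => n _.
by rewrite mcoeffZ scalerA mulrCA !mulrA.
Qed.

Lemma mulA0l b : Defs.mulA theta 0 b = 0.
Proof. by rewrite /Defs.mulA msupp0 big_nil. Qed.

Lemma mulA0r a : Defs.mulA theta a 0 = 0.
Proof. by rewrite /Defs.mulA big1 // => m _; rewrite msupp0 big_nil. Qed.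

Lemma mulAX m n : Defs.mulA theta 'X_[m] 'X_[n] = tw theta m n *: 'X_[(m + n)%MM].
Proof. by rewrite /Defs.mulA !msuppX !big_seq1 !mcoeffX !eqxx !mul1r. Qed.

Lemma tw0r m : tw theta m 0%MM = 1.
Proof. by rewrite /tw big1 // => i _; rewrite big1 // => j _; rewrite mnm0E muln0 expr0. Qed.

Lemma tw0l m : tw theta 0%MM m = 1.
Proof. by rewrite /tw big1 // => i _; rewrite big1 // => j _; rewrite mnm0E mul0n expr0. Qed.

Lemma mulA1r a : Defs.mulA theta a 1 = a.
Proof.
rewrite -mpolyX0 /Defs.mulA msuppX {3}[a]mpolyE; apply: eq_bigr => m _.
by rewrite big_seq1 mcoeffX eqxx mulr1 tw0r mulr1 addm0.
Qed.

Lemma mulA1l a : Defs.mulA theta 1 a = a.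
Proof.
rewrite -mpolyX0 /Defs.mulA msuppX big_seq1 {3}[a]mpolyE; apply: eq_bigr => m _.
by rewrite mcoeffX eqxx mul1r tw0l mulr1 add0m.
Qed.


Definition rho (i : 'I_4) (m : 'X_{1..4}) : Cx := \prod_(j < 4) R j i ^+ m j.

Lemma phi_w (k : nat) i (a : A) : leq (msize a) k ->
  Defs.phi theta i a = \sum_(m : 'X_{1..4 < k}) (a@_m * rho i m) *: 'X_[m].
Proof.
move=> ha; rewrite /Defs.phi; apply: etrans.
  apply: (@sum_msupp_w _ (fun m c => (c * rho i m) *: 'X_[m]) a k _ ha).
  by move=> m; rewrite mul0r scale0r.
by [].
Qed.

Lemma phiD i a b : Defs.phi theta i (a + b) = Defs.phi theta i a + Defs.phi theta i b.
Proof.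
set k := maxn (msize a) (msize b).
have h1 : leq (msize a) k by rewrite leq_max leqnn.
have h2 : leq (msize b) k by rewrite /k !leq_max leqnn !orbT.
have h4 : leq (msize (a + b)) k.
  by apply: leq_trans (msizeD_le _ _) _; rewrite geq_max h1 h2.
rewrite !(@phi_w k) // -big_split; apply: eq_bigr => m _.
by rewrite mcoeffD !mulrDl scalerDl.
Qed.

Lemma phiZ i c a : Defs.phi theta i (c *: a) = c *: Defs.phi theta i a.
Proof.
set k := msize a.
have h4 : leq (msize (c *: a)) k by apply: msizeZ_le.
rewrite !(@phi_w k) // scaler_sumr; apply: eq_bigr => m _.
by rewrite mcoeffZ scalerA mulrA.
Qed.

Lemma phi0 i : Defs.phi theta i 0 = 0.
Proof. by rewrite /Defs.phi msupp0 big_nil. Qed.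

Lemma phiX i m : Defs.phi theta i 'X_[m] = rho i m *: 'X_[m].
Proof. by rewrite /Defs.phi msuppX big_seq1 mcoeffX eqxx mul1r. Qed.

Lemma rho0 i : rho i 0%MM = 1.
Proof. by rewrite /rho big1 // => j _; rewrite mnm0E expr0. Qed.

Lemma rhoD i m n : rho i (m + n)%MM = rho i m * rho i n.
Proof. by rewrite /rho -big_split; apply: eq_bigr => j _; rewrite mnmDE exprD. Qed.

Lemma rhoU i l : rho l U_(i)%MM = R i l.
Proof.
rewrite /rho (bigD1 i) //= big1 ?mulr1; first by rewrite mnm1E eqxx expr1.
by move=> j /negbTE hj; rewrite mnm1E eq_sym hj expr0.
Qed.

Lemma phi1 i : Defs.phi theta i 1 = 1.
Proof. by rewrite -mpolyX0 phiX rho0 scale1r. Qed.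

Lemma lin_ind (P : A -> Prop) :
  P 0 -> (forall a b, P a -> P b -> P (a + b)) -> (forall c a, P a -> P (c *: a)) ->
  (forall m, P 'X_[m]) -> forall a, P a.
Proof.
move=> P0 PD PZ PX; elim/mpolyind => // c m p _ _ Pp.
by apply: PD => //; apply: PZ.
Qed.

Lemma phiC i j a : Defs.phi theta i (Defs.phi theta j a) = Defs.phi theta j (Defs.phi theta i a).
Proof.
elim/lin_ind: a => [|a b ha hb|c a ha|m].
- by rewrite !phi0.
- by rewrite !phiD ha hb.
- by rewrite !phiZ ha.
- by rewrite !phiX !phiZ !phiX !scalerA mulrC.
Qed.

Lemma phiM i a b : Defs.phi theta i (Defs.mulA theta a b) =
  Defs.mulA theta (Defs.phi theta i a) (Defs.phi theta i b).
Proof.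
elim/lin_ind: a b => [|a a' ha ha'|c a ha|m] b.
- by rewrite !mulA0l phi0 mulA0l.
- by rewrite mulADl !phiD mulADl ha ha'.
- by rewrite mulAZl !phiZ mulAZl ha.
elim/lin_ind: b => [|b b' hb hb'|c b hb|n].
- by rewrite !mulA0r phi0 mulA0r.
- by rewrite mulADr !phiD mulADr hb hb'.
- by rewrite mulAZr !phiZ mulAZr hb.
rewrite mulAX !phiX phiZ phiX mulAZl mulAZr mulAX !scalerA rhoD.
by rewrite mulrC.
Qed.


Opaque Defs.phi Defs.mulA.

Lemma tw_neq0 m n : tw theta m n != 0.
Proof.
apply/prodf_neq0 => i _; apply/prodf_neq0 => j _.
by rewrite expf_neq0 // R_neq0.
Qed.

Section D.
Variable d : A -> Omega1.
Hypothesis hd : is_dA theta d.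

Lemma dD a b : d (a + b) = d a + d b.
Proof. by case: hd. Qed.
Lemma dZ c a : d (c *: a) = c *: d a.
Proof. by case: hd. Qed.
Lemma dzA i : d (zA i) = dz i.
Proof. by case: hd. Qed.
Lemma dMk a b k : d (Defs.mulA theta a b) k =
  Defs.mulA theta (d a k) (Defs.phi theta k b) + Defs.mulA theta a (d b k).
Proof. by case: hd => _ _ _ ->; rewrite !ffunE. Qed.

Lemma d0 : d 0 = 0.
Proof. by apply/(addrI (d 0)); rewrite -dD !addr0. Qed.

Lemma d1 : d 1 = 0.
Proof.
apply/ffunP => k; have := dMk 1 1 k; rewrite phi1 !mulA1r mulA1l => h.
by rewrite ffunE; apply/(addrI (d 1 k)); rewrite -h addr0.
Qed.

Definition Q l a := forall k, d (Defs.phi theta l a) k = R k l *: Defs.phi theta l (d a k).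

Lemma scE (c : Cx) (f : Omega1) k : (c *: f) k = c *: f k.
Proof. by rewrite ffunE. Qed.
Lemma adE (f g : Omega1) k : (f + g) k = f k + g k.
Proof. by rewrite ffunE. Qed.
Lemma zeE k : (0 : Omega1) k = 0.
Proof. by rewrite ffunE. Qed.

Lemma Q0 l : Q l 0.
Proof. by move=> k; rewrite phi0 d0 zeE phi0 scaler0. Qed.

Lemma Q1 l : Q l 1.
Proof. by move=> k; rewrite phi1 d1 zeE phi0 scaler0. Qed.

Lemma QD l a b : Q l a -> Q l b -> Q l (a + b).
Proof. by move=> ha hb k; rewrite phiD dD adE ha hb dD adE phiD scalerDr. Qed.

Lemma QZ l c a : Q l a -> Q l (c *: a).
Proof.
move=> ha k; rewrite phiZ dZ scE ha dZ scE phiZ.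
by rewrite scalerA scalerA mulrC.
Qed.

Lemma QZinv l c a : c != 0 -> Q l (c *: a) -> Q l a.
Proof.
move=> hc ha k; apply: (scalerI hc); have := ha k.
rewrite phiZ dZ scE dZ scE phiZ => ->.
by rewrite scalerA scalerA mulrC.
Qed.

Lemma QM l a b : Q l a -> Q l b -> Q l (Defs.mulA theta a b).
Proof.
move=> ha hb k; rewrite phiM dMk ha hb mulAZl mulAZr dMk phiD !phiM scalerDr.
by rewrite phiC.
Qed.

Lemma QU l i : Q l 'X_i.
Proof.
move=> k; rewrite phiX dZ dzA rhoU ffunE /dz ffunE.
case: eqP => [->|_]; first by rewrite phi1.
by rewrite phi0 !scaler0.
Qed.

Lemma QX l m : Q l 'X_[m].
Proof.
move: {2}(mdeg m) (leqnn (mdeg m)) => N; elim: N m => [|N IH] m hm.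
  have /eqP -> : m == 0%MM by rewrite -mdeg_eq0 -leqn0.
  by rewrite mpolyX0; apply: Q1.
case: (pickP (fun i => m i != 0%N)) => [i hi|h0]; last first.
  have -> : m = 0%MM by apply/mnmP => i; rewrite mnm0E; move: (h0 i) => /= /negbFE /eqP.
  by rewrite mpolyX0; apply: Q1.
set m' := (m - U_(i))%MM.
have em : m = (m' + U_(i))%MM by rewrite submK // lep1mP.
have hm' : leq (mdeg m') N by move: hm; rewrite em mdegD mdeg1 addn1 ltnS.
rewrite em; apply: (@QZinv l (tw theta m' U_(i))); first exact: tw_neq0.
by rewrite -mulAX; apply: QM; [apply: IH | apply: QU].
Qed.

Lemma Qall l a : Q l a.
Proof.
elim/lin_ind: a => [|a b ha hb|c a ha|m].
- exact: Q0.
- exact: QD.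
- exact: QZ.
- exact: QX.
Qed.

Lemma nablaE w k l : nablaO theta d w (k, l) = d (w l) k.
Proof.
rewrite /nablaO sum_ffunE (bigD1 l) //= big1 ?addr0.
  by rewrite ffunE /= /dz ffunE eqxx phi1 mulA1r.
move=> i hi; rewrite ffunE /= /dz ffunE eq_sym (negbTE hi).
by rewrite phi0 mulA0r.
Qed.

End D.

Lemma sum_delta (F : 'I_4 -> A) l : (forall i, i != l -> F i = 0) ->
  \sum_(i < 4) F i = F l.
Proof.
by move=> h; rewrite (bigD1 l) //= big1 ?addr0 // => i /h.
Qed.

Lemma sigmaE x k l : sigmaO theta x (k, l) = R k l *: x (l, k).
Proof.
rewrite /sigmaO sum_ffunE (@sum_delta _ l); last first.
  move=> i hi; rewrite sum_ffunE big1 // => j _.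
  rewrite ffunE ffunE ffunE.
  rewrite [(k, l).1]/= [(k, l).2]/=.
  rewrite /dz ffunE ffunE [l == i]eq_sym (negbTE hi).
  by rewrite phi0 mulA0r scaler0 mulA0r.
rewrite sum_ffunE (@sum_delta _ k); last first.
  move=> j hj; rewrite ffunE ffunE ffunE.
  rewrite [(k, l).1]/= [(k, l).2]/=.
  rewrite /dz ffunE [k == j]eq_sym (negbTE hj).
  by rewrite mulA0l scaler0 mulA0r.
rewrite ffunE ffunE ffunE.
rewrite [(k, l).1]/= [(k, l).2]/=.
by rewrite /dz ffunE ffunE eqxx eqxx phi1 mulA1r mulAZr mulA1r.
Qed.

Lemma ad2E (f g : Omega2) ij : (f + g) ij = f ij + g ij.
Proof. by rewrite ffunE. Qed.
Lemma sc2E (c : Cx) (f : Omega2) ij : (c *: f) ij = c *: f ij.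
Proof. by rewrite ffunE. Qed.

End S.

Theorem lemma4p3 (theta : Rdefinitions.R) (d : A -> Omega1) :
  is_dA theta d ->
  bimodule_connection theta d (nablaO theta d) (sigmaO theta).
Proof.
move=> hd; split.
- split.
  + move=> v w; apply/ffunP => -[k l].
    by rewrite ad2E !(nablaE theta d) ffunE (dD hd) adE.
  + move=> c v; apply/ffunP => -[k l].
    by rewrite sc2E !(nablaE theta d) ffunE (dZ hd) scE.
- split.
  + move=> x y; apply/ffunP => -[k l].
    by rewrite ad2E !sigmaE ad2E scalerDr.
  + move=> a x; apply/ffunP => -[k l].
    by rewrite sigmaE ffunE ffunE sigmaE mulAZr.
  + move=> x a; apply/ffunP => -[k l].
    by rewrite sigmaE ffunE ffunE sigmaE mulAZl /= phiC.
  + exists (fun x : Omega2 => [ffun ij => Rmx theta ij.1 ij.2 *: x (ij.2, ij.1)]).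
      move=> x; apply/ffunP => -[k l].
      by rewrite ffunE sigmaE scalerA /= RR scale1r.
    move=> x; apply/ffunP => -[k l].
    by rewrite sigmaE ffunE /= scalerA mulrC RR scale1r.
- move=> a v; apply/ffunP => -[k l].
  rewrite (nablaE theta d) ffunE (dMk hd) ad2E ffunE (nablaE theta d) ffunE /=.
  by rewrite addrC.
- move=> v a; apply/ffunP => -[k l].
  rewrite (nablaE theta d) ffunE (dMk hd) ad2E ffunE (nablaE theta d) sigmaE ffunE /=.
  by rewrite (Qall hd) mulAZr.
Qed.
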